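(* Let $R_{\rm d}$ and $R_{\rm o}$ be real skew-symmetric $n\times n$ matrices such that $R\equiv\sigma^0\otimes R_{\rm d}+\sigma^x\otimes R_{\rm o}=\begin{bmatrix}R_{\rm d}&R_{\rm o}\\R_{\rm o}&R_{\rm d}\end{bmatrix}$ is unitary and $\mathrm{Pf}\,R=-1$. Then $\det R_{\rm d}=0$.
   Context: $\sigma^0$ is the $2\times2$ identity, $\sigma^x=\begin{bmatrix}0&1\\1&0\end{bmatrix}$, and $\mathrm{Pf}$ denotes the Pfaffian. *)

(* Defs.v *)
From HB Require Import structures.
From mathcomp Require Import all_boot all_order all_algebra all_fingroup.
Set Implicit Arguments. Unset Strict Implicit. Unset Printing Implicit Defensive.
Import Order.TTheory GRing.Theory Num.Theory.
Local Open Scope ring_scope.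

Lemma pf_idx_even_proof (m : nat) (i : 'I_m) : (i.*2 < m + m)%N.
Proof. by rewrite addnn ltn_double. Qed.
Lemma pf_idx_odd_proof (m : nat) (i : 'I_m) : (i.*2.+1 < m + m)%N.
Proof. by rewrite addnn ltn_Sdouble. Qed.

Definition pf_even (m : nat) (i : 'I_m) : 'I_(m + m) := Ordinal (pf_idx_even_proof i).
Definition pf_odd (m : nat) (i : 'I_m) : 'I_(m + m) := Ordinal (pf_idx_odd_proof i).

Definition pfaffian (R : fieldType) (m : nat) (A : 'M[R]_(m + m)) : R :=
  ((2 ^ m * m`!)%N%:R)^-1 *
  \sum_(s : 'S_(m + m)) (-1) ^+ s * \prod_(i < m) A (s (pf_even i)) (s (pf_odd i)).

Definition skew_symmetric (R : pzRingType) (n : nat) (A : 'M[R]_n) : Prop :=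
  A^T = - A.

(* Main.v *)
Require Import Defs.
From HB Require Import structures.
From mathcomp Require Import all_boot all_order all_algebra all_fingroup.
From mathcomp Require Import zify ring complex.
Import Order.TTheory GRing.Theory Num.Theory.
Local Open Scope ring_scope.
Set Implicit Arguments. Unset Strict Implicit. Unset Printing Implicit Defensive.

Section Idx.
Variable m : nat.
Local Notation N := (m + m)%N.

Lemma half_proof (x : 'I_N) : (x./2 < m)%N.
Proof. by rewrite ltn_half_double -addnn. Qed.
Definition halfo (x : 'I_N) : 'I_m := Ordinal (half_proof x).

Lemma val_pe (i : 'I_m) : val (pf_even i) = i.*2. Proof. by []. Qed.
Lemma val_po (i : 'I_m) : val (pf_odd i) = i.*2.+1. Proof. by []. Qed.

Lemma ord_pe_po (x : 'I_N) : x = if odd x then pf_odd (halfo x) else pf_even (halfo x).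
Proof.
apply: val_inj; have := odd_double_half x; case: (odd x) => /= h.
  by rewrite -{1}h.
by rewrite -{1}h.
Qed.

Lemma half_pe (i : 'I_m) : halfo (pf_even i) = i.
Proof. apply: val_inj => /=; rewrite -[RHS](half_bit_double _ false); by []. Qed.
Lemma half_po (i : 'I_m) : halfo (pf_odd i) = i.
Proof. apply: val_inj => /=; rewrite -[RHS](half_bit_double _ true); by []. Qed.
Lemma odd_pe (i : 'I_m) : odd (pf_even i) = false. Proof. by rewrite /= odd_double. Qed.
Lemma odd_po (i : 'I_m) : odd (pf_odd i) = true. Proof. by rewrite /= odd_double. Qed.

Lemma pe_inj : injective (@pf_even m).
Proof. by move=> i j /(congr1 halfo); rewrite !half_pe. Qed.
Lemma po_inj : injective (@pf_odd m).
Proof. by move=> i j /(congr1 halfo); rewrite !half_po. Qed.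
Lemma pe_neq_po (i j : 'I_m) : pf_even i != pf_odd j.
Proof. by apply/eqP => /(congr1 (fun x : 'I_N => odd x)); rewrite odd_pe odd_po. Qed.

Lemma prod_pairs (R : comPzRingType) (G : 'I_N -> R) :
  \prod_(x : 'I_N) G x = \prod_(i < m) (G (pf_even i) * G (pf_odd i)).
Proof.
rewrite (partition_big halfo xpredT) //=; apply: eq_bigr => i _.
rewrite (bigD1 (pf_even i)) ?half_pe ?eqxx //= (bigD1 (pf_odd i)) /= ?half_po ?eqxx ?(negbTE (pe_neq_po _ _)) //.
rewrite big1 ?mulr1 // => x /andP[/andP[hx nx1] nx2].
move: nx1 nx2; rewrite (ord_pe_po x) (eqP hx); case: (odd x); rewrite eqxx //=.
by rewrite eq_sym pe_neq_po.
Qed.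
End Idx.

Definition pfS (R : comPzRingType) m (C : 'M[R]_(m+m)) :=
  \sum_(s : 'S_(m+m)) (-1)^+s * \prod_(i < m) C (s (pf_even i)) (s (pf_odd i)).

Lemma pfS_congr (R : comPzRingType) m (M C : 'M[R]_(m+m)) :
  pfS (M^T *m C *m M) = \det M * pfS C.
Proof.
have entry x y : (M^T *m C *m M) x y =
    \sum_(p : 'I_(m+m) * 'I_(m+m)) M p.1 x * C p.1 p.2 * M p.2 y.
  rewrite mxE; under eq_bigr => b _ do rewrite mxE big_distrl /=.
  rewrite exchange_big pair_bigA /=; apply: eq_bigr => p _; by rewrite mxE.
rewrite /pfS.
transitivity (\sum_(s : 'S_(m+m)) (-1)^+s *
   \sum_(f : {ffun 'I_m -> 'I_(m+m) * 'I_(m+m)}) \prod_i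
     (M (f i).1 (s (pf_even i)) * C (f i).1 (f i).2 * M (f i).2 (s (pf_odd i)))).
  apply: eq_bigr => s _; congr (_ * _).
  rewrite -(bigA_distr_bigA (fun i (p : 'I_(m+m) * 'I_(m+m)) => M p.1 (s (pf_even i)) * C p.1 p.2 * M p.2 (s (pf_odd i)))) /=.
  by apply: eq_bigr => i _; exact: entry.
under eq_bigr do rewrite big_distrr.
rewrite exchange_big /=.
pose T (h : {ffun 'I_(m+m) -> 'I_(m+m)}) :=
  (\prod_(i < m) C (h (pf_even i)) (h (pf_odd i))) * \det (\matrix_(x, y) M (h x) y).
pose hf (f : {ffun 'I_m -> 'I_(m+m) * 'I_(m+m)}) : {ffun 'I_(m+m) -> 'I_(m+m)} :=
  [ffun x : 'I_(m+m) => if odd x then (f (halfo x)).2 else (f (halfo x)).1].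
have hfe f i : hf f (pf_even i) = (f i).1 by rewrite ffunE odd_pe half_pe.
have hfo f i : hf f (pf_odd i) = (f i).2 by rewrite ffunE odd_po half_po.
transitivity (\sum_f T (hf f)).
  apply: eq_bigr => f _; rewrite /T.
  rewrite [X in _ = _ * X](_ : _ = \sum_(s : 'S_(m+m)) (-1)^+s *
      \prod_(i < m) (M (f i).1 (s (pf_even i)) * M (f i).2 (s (pf_odd i)))); last first.
    apply: eq_bigr => s _; rewrite (prod_pairs (fun x => (\matrix_(x, y) M (hf f x) y) x (s x))).
    by congr (_ * _); apply: eq_bigr => i _; rewrite !mxE hfe hfo.
  rewrite big_distrr; apply: eq_bigr => s _.
  under [in RHS]eq_bigr do rewrite hfe hfo.
  apply: (etrans _ (esym (mulrCA _ _ _))); congr (_ * _); rewrite -big_split /=.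
  by apply: eq_bigr => i _; ring.
pose g (h : {ffun 'I_(m+m) -> 'I_(m+m)}) : {ffun 'I_m -> 'I_(m+m) * 'I_(m+m)} :=
  [ffun i => (h (pf_even i), h (pf_odd i))].
transitivity (\sum_h T h).
  symmetry; rewrite (reindex hf) //=; exists g => [f _ | h _].
    by apply/ffunP => i; rewrite ffunE hfe hfo -surjective_pairing.
  by apply/ffunP => x; rewrite ffunE !ffunE [in RHS](ord_pe_po x); case: (odd x).
rewrite (bigID (fun h : {ffun 'I_(m+m) -> 'I_(m+m)} => injectiveb h)) /=.
rewrite [X in _ + X]big1 ?addr0 => [|h Uh]; last first.
  case/injectivePn: Uh => x1 [x2 Dx Ex].
  by rewrite /T (determinant_alternate Dx) ?mulr0 // => y; rewrite !mxE Ex.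
rewrite (reindex (@pval _)) /=; last first.
  pose in_Sn := insubd (1%g : 'S_(m+m)).
  by exists in_Sn => /= f Uf; first apply: val_inj; apply: insubdK.
rewrite big_distrr; apply: eq_big => /= [s | s _]; rewrite ?(valP s) //.
rewrite /T.
have -> : (\matrix_(x, y) M (pval s x) y) = row_perm s M.
  by apply/matrixP => x y; rewrite !mxE pvalE.
rewrite row_permE det_mulmx det_perm.
have abc : forall a b c : R, a * (b * c) = c * (b * a) by move=> a b c; ring.
rewrite abc; congr (_ * (_ * _)); apply: eq_bigr => i _; by rewrite -!pvalE.
Qed.

Lemma sum_swap_zero (R : fieldType) m (S : 'M[R]_(m+m)) (k0 : 'I_m)
    (G : 'I_m -> 'M[R]_(m+m)) : (2:R) != 0 -> S^T = S ->
  \sum_(s : 'S_(m+m)) (-1)^+s * (S (s (pf_even k0)) (s (pf_odd k0)) *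
     \prod_(i < m | i != k0) G i (s (pf_even i)) (s (pf_odd i))) = 0.
Proof.
move=> h2 hS.
have Ssym x y : S x y = S y x by rewrite -[in LHS]hS mxE.
pose t := tperm (pf_even k0) (pf_odd k0).
pose F (s : 'S_(m+m)) := (-1)^+s * (S (s (pf_even k0)) (s (pf_odd k0)) *
     \prod_(i < m | i != k0) G i (s (pf_even i)) (s (pf_odd i))).
rewrite -/(\sum_s F s).
set X := (\sum_s F s).
have HX : X = - X.
  have e : X = \sum_s F (t * s)%g by rewrite /X (reindex_inj (mulgI t)).
  rewrite {1}e.
  rewrite /X -sumrN; apply: eq_bigr => s _; rewrite /F.
  rewrite odd_permM odd_tperm pe_neq_po /= signrN mulNr. congr (- _).
  rewrite !permM tpermL tpermR Ssym. congr (_ * (_ * _)).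
  apply: eq_bigr => i hi; rewrite !permM !tpermD //.
  - by rewrite pe_neq_po.
  - by apply: contra hi => /eqP/po_inj ->.
  - by apply: contra hi => /eqP/pe_inj ->.
  - by rewrite eq_sym pe_neq_po.
have : X * 2 = 0 by rewrite mulrDr mulr1 {1}HX addNr.
by move/eqP; rewrite mulf_eq0 (negbTE h2) orbF => /eqP.
Qed.

Lemma pfS_sym (R : fieldType) m (K S : 'M[R]_(m+m)) : (2:R) != 0 -> S^T = S ->
  pfS (K + S) = pfS K.
Proof.
move=> h2 hS.
pose G k (i : 'I_m) := if (i < k)%N then K else K + S.
pose P k := \sum_(s : 'S_(m+m)) (-1)^+s * \prod_(i < m) G k i (s (pf_even i)) (s (pf_odd i)).
have P0 : P 0%N = pfS (K + S) by [].
have Pm : P m = pfS K by rewrite /P /G; apply: eq_bigr => s _; congr (_ * _); apply: eq_bigr => i _; rewrite ltn_ord.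
suff H : forall k, (k <= m)%N -> P k = P 0%N by rewrite -P0 -Pm H.
elim=> [//|k IH] hk.
rewrite -IH ?(ltnW hk) //.
pose k0 := Ordinal hk.
have Ge i : i != k0 -> G k.+1 i = G k i.
  move=> hi; rewrite /G ltnS leq_eqVlt.
  by have -> : (i == k :> nat) = false by apply/negbTE; apply: contra hi => /eqP h; apply/eqP/val_inj.
rewrite /P.
under eq_bigr => s _ do rewrite (bigD1 k0) //=.
under [in RHS]eq_bigr => s _ do rewrite (bigD1 k0) //=.
have G1 : G k.+1 k0 = K by rewrite /G ltnSn.
have G0 : G k k0 = K + S by rewrite /G ltnn.
rewrite G1 G0.
have Z := sum_swap_zero k0 (G k) h2 hS.
set Q := fun s : 'S_(m+m) => \prod_(i < m | i != k0) G k i (s (pf_even i)) (s (pf_odd i)).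
transitivity (\sum_(s : 'S_(m+m)) (-1)^+s * (K (s (pf_even k0)) (s (pf_odd k0)) * Q s)).
  apply: eq_bigr => s _; congr (_ * (_ * _)); apply: eq_bigr => i hi; by rewrite Ge.
under [in RHS]eq_bigr => s _ do rewrite mxE mulrDl mulrDr.
by rewrite big_split /= Z addr0.
Qed.

Section Base.
Variable m : nat.
Local Notation N := (m + m)%N.

Lemma pepo_ind (P : 'I_N -> Prop) :
  (forall i, P (pf_even i)) -> (forall i, P (pf_odd i)) -> forall x, P x.
Proof. move=> he ho x; rewrite (ord_pe_po x); case: (odd x); [exact: ho | exact: he]. Qed.

Definition flip (x : 'I_N) : 'I_N :=
  if odd x then pf_even (halfo x) else pf_odd (halfo x).
Lemma flip_pe i : flip (pf_even i) = pf_odd i.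
Proof. by rewrite /flip odd_pe half_pe. Qed.
Lemma flip_po i : flip (pf_odd i) = pf_even i.
Proof. by rewrite /flip odd_po half_po. Qed.
Lemma flipK : involutive flip.
Proof. by move=> x; elim/pepo_ind: x => i; rewrite ?flip_pe ?flip_po ?flip_pe. Qed.
Definition t0 : 'S_N := perm (can_inj flipK).
Lemma t0E x : t0 x = flip x. Proof. by rewrite permE. Qed.

Definition phi1f (t : 'S_m) (x : 'I_N) : 'I_N :=
  if odd x then x else pf_even (t (halfo x)).
Lemma phi1f_pe t i : phi1f t (pf_even i) = pf_even (t i).
Proof. by rewrite /phi1f odd_pe half_pe. Qed.
Lemma phi1f_po t i : phi1f t (pf_odd i) = pf_odd i.
Proof. by rewrite /phi1f odd_po. Qed.
Lemma phi1f_inj t : injective (phi1f t).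
Proof.
move=> x y; elim/pepo_ind: x => i; elim/pepo_ind: y => j; rewrite ?phi1f_pe ?phi1f_po.
- by move/pe_inj/perm_inj ->.
- by move=> h; move: (pe_neq_po (t i) j); rewrite h eqxx.
- by move=> h; move: (pe_neq_po (t j) i); rewrite h eqxx.
- by [].
Qed.
Definition phi1 t : 'S_N := perm (@phi1f_inj t).
Definition Phi t : 'S_N := (phi1 t * (phi1 t) ^ t0)%g.

Lemma Phi_pe t i : Phi t (pf_even i) = pf_even (t i).
Proof.
rewrite /Phi permM.
have -> : phi1 t (pf_even i) = pf_even (t i) by rewrite permE phi1f_pe.
rewrite {1}(_ : pf_even (t i) = t0 (pf_odd (t i))); last by rewrite t0E flip_po.
by rewrite permJ t0E permE phi1f_po flip_po.
Qed.
Lemma Phi_po t i : Phi t (pf_odd i) = pf_odd (t i).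
Proof.
rewrite /Phi permM.
have -> : phi1 t (pf_odd i) = pf_odd i by rewrite permE phi1f_po.
rewrite {1}(_ : pf_odd i = t0 (pf_even i)); last by rewrite t0E flip_pe.
by rewrite permJ t0E permE phi1f_pe flip_pe.
Qed.
Lemma Phi_even t : odd_perm (Phi t) = false.
Proof. by rewrite /Phi odd_permM odd_permJ addbb. Qed.
Lemma Phi_inj : injective Phi.
Proof.
move=> t1 t2 h; apply/permP => i; apply: pe_inj.
by rewrite -!Phi_pe h.
Qed.

Definition Emx (R : pzRingType) : 'M[R]_N :=
  \matrix_(x, y) ((~~ odd x) && (y == flip x))%:R.

Definition good (s : 'S_N) :=
  [forall i, (~~ odd (s (pf_even i))) && (s (pf_odd i) == flip (s (pf_even i)))].

Lemma good_Phi s : good s = (s \in [set Phi t | t in setT]).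
Proof.
apply/idP/idP.
  move/forallP => g.
  have tinj : injective (fun i => halfo (s (pf_even i))).
    move=> i j h; apply: pe_inj; apply: (@perm_inj _ s).
    rewrite (ord_pe_po (s (pf_even i))) (ord_pe_po (s (pf_even j))) h.
    by move: (g i) (g j) => /andP[/negbTE -> _] /andP[/negbTE -> _].
  apply/imsetP; exists (perm tinj) => //.
  apply/permP => x; elim/pepo_ind: x => i.
    rewrite Phi_pe permE {1}(ord_pe_po (s (pf_even i))).
    by move: (g i) => /andP[/negbTE -> _].
  rewrite Phi_po permE; move: (g i) => /andP[he /eqP ->].
  by rewrite {1}(ord_pe_po (s (pf_even i))) (negbTE he) flip_pe.
case/imsetP => t _ ->; apply/forallP => i.
by rewrite Phi_pe Phi_po odd_pe flip_pe eqxx.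
Qed.

Lemma pfS_E (R : comPzRingType) : pfS (Emx R) = (m`!)%:R.
Proof.
rewrite /pfS.
transitivity (\sum_(s : 'S_N | good s) ((-1) ^+ s : R)).
  rewrite [RHS]big_mkcond /=; apply: eq_bigr => s _.
  case: (boolP (good s)) => gs.
    rewrite big1 ?mulr1 // => i _; rewrite mxE.
    by move/forallP: gs => /(_ i) ->.
  have [i hi] : exists i, ~~ ((~~ odd (s (pf_even i))) && (s (pf_odd i) == flip (s (pf_even i)))).
    by apply/existsP; rewrite -negb_forall.
  by rewrite (bigD1 i) //= mxE (negbTE hi) mul0r mulr0.
rewrite (eq_bigl (mem [set Phi t | t in setT])); last by move=> s; rewrite good_Phi.
rewrite big_imset /=; last by move=> t1 t2 _ _; exact: Phi_inj.
under eq_bigr do rewrite Phi_even expr0.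
by rewrite sumr_const cardsT card_Sn.
Qed.
End Base.

Lemma pfS_scale (R : comPzRingType) m (a : R) (C : 'M[R]_(m+m)) :
  pfS (a *: C) = a ^+ m * pfS C.
Proof.
rewrite /pfS mulr_sumr; apply: eq_bigr => s _.
under eq_bigr do rewrite mxE.
by rewrite big_split /= prodr_const card_ord mulrCA.
Qed.

Lemma pfaffianE (F : fieldType) m (C : 'M[F]_(m+m)) :
  pfaffian C = ((2 ^ m * m`!)%N%:R)^-1 * pfS C.
Proof. by []. Qed.

Lemma pfaffian_map (F F' : fieldType) (f : {rmorphism F -> F'}) m (C : 'M[F]_(m+m)) :
  pfaffian (map_mx f C) = f (pfaffian C).
Proof.
rewrite !pfaffianE [RHS]rmorphM fmorphV rmorph_nat rmorph_sum; congr (_ * _).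
apply: eq_bigr => s _; rewrite rmorphM rmorph_sign rmorph_prod; congr (_ * _).
by apply: eq_bigr => i _; rewrite mxE.
Qed.

Section J0.
Variable F : fieldType.
Hypothesis hc : forall n : nat, (0 < n)%N -> n%:R != 0 :> F.
Variable m : nat.

Definition J0 : 'M[F]_(m+m) := Emx m F - (Emx m F)^T.

Definition sgn (x : 'I_(m+m)) : F := if odd x then -1 else 1.

Lemma odd_flip (x : 'I_(m+m)) : odd (flip x) = ~~ odd x.
Proof. by elim/pepo_ind: x => i; rewrite ?flip_pe ?flip_po ?odd_pe ?odd_po. Qed.

Lemma J0E x y : J0 x y = (y == flip x)%:R * sgn x.
Proof.
rewrite /J0 /sgn !mxE.
elim/pepo_ind: x => i; elim/pepo_ind: y => j;
  rewrite ?flip_pe ?flip_po ?odd_pe ?odd_po /=.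
- by rewrite !(negbTE (pe_neq_po _ _)) subr0 mul0r.
- by rewrite subr0 mulr1.
- by rewrite (inj_eq (@po_inj m)) (inj_eq (@pe_inj m)) eq_sym mulrN1 sub0r.
- by rewrite eq_sym (negbTE (pe_neq_po _ _)) mul0r subr0.
Qed.

Lemma J0_tr : J0^T = - J0.
Proof. by rewrite /J0 linearB /= trmxK opprB. Qed.

Lemma J0_sq : J0 *m J0 = - 1%:M.
Proof.
apply/matrixP => x z; rewrite !mxE (bigD1 (flip x)) //= big1 ?addr0.
  rewrite !J0E eqxx mul1r flipK /sgn odd_flip.
  rewrite eq_sym; case: (odd x); case: (x == z); rewrite /= ?mulr1n ?mulr0n ?mulr0 ?mulr1 ?mul1r ?mul0r ?mulN1r ?opprK ?oppr0 //.
by move=> y hy; rewrite J0E (negbTE hy) mul0r mul0r.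
Qed.

Lemma pfS_J0 : pfS J0 = (2 ^ m * m`!)%N%:R.
Proof.
have h2 : (2:F) != 0 by exact: hc.
set E := Emx m F.
have e : E = 2^-1 *: J0 + 2^-1 *: (E + E^T).
  by apply/matrixP => x y; rewrite !mxE; field.
have hS : (2^-1 *: (E + E^T))^T = 2^-1 *: (E + E^T).
  by rewrite linearZ /= linearD /= trmxK addrC.
have := pfS_E m F; rewrite -/E e pfS_sym // pfS_scale => h.
have h2m : (2:F) ^+ m != 0 by rewrite expf_neq0.
rewrite natrM natrX -h mulrA exprVn mulfV // mul1r.
done.
Qed.

Lemma pfaffian_J0 : pfaffian J0 = 1.
Proof.
rewrite pfaffianE pfS_J0 mulVf //; apply: hc.
by rewrite muln_gt0 expn_gt0 fact_gt0.
Qed.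

Lemma det_J0 : \det J0 = 1.
Proof.
have := pfS_congr J0 J0.
have e : J0^T *m J0 *m J0 = J0 by rewrite J0_tr mulNmx J0_sq opprK mul1mx.
rewrite e pfS_J0 => h.
have hn : (2 ^ m * m`!)%N%:R != 0 :> F.
  by apply: hc; rewrite muln_gt0 expn_gt0 fact_gt0.
by apply: (mulIf hn); rewrite mul1r -h.
Qed.
End J0.

Lemma val_flip m (x : 'I_(m+m)) : val (flip x) = if odd x then (val x).-1 else (val x).+1.
Proof. by elim/pepo_ind: x => i; rewrite ?flip_pe ?flip_po ?odd_pe ?odd_po. Qed.

Lemma J0_block (F : fieldType) k :
  block_mx (J0 F k) 0 0 (J0 F k) = J0 F (k + k).
Proof.
have ev : odd (k + k) = false by rewrite addnn odd_double.
apply/matrixP => x y.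
case: (split_ordP x) => x' ->; case: (split_ordP y) => y' ->;
  rewrite ?block_mxEul ?block_mxEur ?block_mxEdl ?block_mxEdr !J0E /sgn -!val_eqE /= !val_flip /=.
- by [].
- rewrite mxE; have hx := ltn_ord x'; have hh := odd_double_half x'.
  case: (boolP (odd x')) hh => hodd /= hh; rewrite (_ : (_ == _) = false) ?mul0r //; apply/negbTE/eqP; lia.
- rewrite mxE oddD ev /=; have hy := ltn_ord y'; have hh := odd_double_half x'.
  case: (boolP (odd x')) hh => hodd /= hh; rewrite (_ : (_ == _) = false) ?mul0r //; apply/negbTE/eqP; lia.
- rewrite oddD ev /=; have hh := odd_double_half x'.
  case: (boolP (odd x')) hh => hodd /= hh; congr (_ %:R * _); apply/eqP/eqP; lia.
Qed.

Section Chain.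
Variable F : fieldType.
Hypothesis hc : forall n : nat, (0 < n)%N -> n%:R != 0 :> F.
Variable ii : F.
Hypothesis hi : ii * ii = -1.
Variable n : nat.

Definition Umx : 'M[F]_(n+n) := block_mx 1%:M ii%:M ii%:M 1%:M.
Definition Xmx (B : 'M[F]_n) : 'M[F]_(n+n) := block_mx 0 B B 0.

Lemma hU (B : 'M[F]_n) : Umx^T *m block_mx B 0 0 B *m Umx = (ii *+ 2) *: Xmx B.
Proof.
rewrite /Umx /Xmx tr_block_mx !tr_scalar_mx !mulmx_block scale_block_mx.
rewrite ?mul0mx ?mulmx0 ?addr0 ?add0r ?mul1mx ?mulmx1 ?mul_scalar_mx ?mul_mx_scalar.
rewrite !scalerA hi scaleN1r addrN addNr scaler0 mulr2n scalerDl.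
by congr block_mx.
Qed.

Lemma detU : \det Umx != 0.
Proof.
pose Ub : 'M[F]_(n+n) := block_mx 1%:M (- ii)%:M (- ii)%:M 1%:M.
have e : Umx *m Ub = (2:F)%:M.
  rewrite /Umx /Ub !mulmx_block !mul1mx !mulmx1 -!scalar_mxM mulrN hi opprK.
  rewrite -!raddfD /= addrN -[(1 + 1)]/(2%:R) [in RHS](scalar_mx_block n n) //.
  by rewrite addNr !raddf0.
have := congr1 determinant e; rewrite det_mulmx det_scalar => h.
apply/negP => /eqP h0; move: h; rewrite h0 mul0r => /esym/eqP.
by rewrite expf_eq0 (negbTE (hc (isT : (0 < 2)%N))) andbF.
Qed.

Lemma hQ (K A : 'M[F]_n) : K^T = -K -> K *m K = -1%:M -> A^T = -A ->
  (block_mx 1%:M 0 0 (-(K *m A)))^T *m Xmx K *m block_mx 1%:M 0 0 (-(K *m A)) = Xmx A.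
Proof.
move=> hK hKK hA.
rewrite /Xmx tr_block_mx !trmx0 tr_scalar_mx linearN /= trmx_mul hK hA !mulmx_block.
rewrite ?mul0mx ?mulmx0 ?addr0 ?add0r ?mul1mx ?mulmx1.
have e1 : K *m - (K *m A) = A.
  rewrite mulmxN mulmxA hKK mulNmx mul1mx; exact: opprK.
have e2 : - (- A *m - K) *m K = A.
  rewrite !mulNmx !mulmxN; apply: etrans (opprK _) _; apply: etrans (mulNmx _ _) _.
  rewrite -mulmxA hKK mulmxN mulmx1; exact: opprK.
by rewrite e1 e2 mul0mx.
Qed.
End Chain.

Lemma pf_diag (F : fieldType) (hc : forall n : nat, (0 < n)%N -> n%:R != 0 :> F)
  (ii : F) (hi : ii * ii = -1) k (A : 'M[F]_(k+k)) : A^T = -A ->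
  pfaffian (block_mx A 0 0 A : 'M_((k+k)+(k+k))) = \det A.
Proof.
move=> hA.
pose K := J0 F k.
have hK : K^T = -K by exact: J0_tr.
have hKK : K *m K = -1%:M by exact: J0_sq.
pose Q : 'M[F]_((k+k)+(k+k)) := block_mx 1%:M 0 0 (-(K *m A)).
have eA := pfS_congr (Umx ii (k+k)) (block_mx A 0 0 A).
rewrite hU // pfS_scale in eA.
have eK := pfS_congr (Umx ii (k+k)) (block_mx K 0 0 K).
rewrite hU // pfS_scale J0_block pfS_J0 // in eK.
have eX := pfS_congr Q (Xmx K).
rewrite hQ // in eX.
have dQ : \det Q = \det A.
  rewrite det_ublock det1 mul1r -scaleN1r detZ det_mulmx det_J0 // mul1r.
  have -> : (-1) ^+ (k + k) = 1 :> F by rewrite -signr_odd addnn odd_double expr0.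
  by rewrite mul1r.
have e : \det (Umx ii (k+k)) * pfS (block_mx A 0 0 A) =
         \det (Umx ii (k+k)) * (\det A * (2 ^ (k + k) * (k + k)`!)%N%:R).
  by rewrite -eA eX dQ mulrCA eK mulrCA.
move/(mulfI (detU hc hi (k + k))): e => e.
rewrite pfaffianE e mulrCA mulVf ?mulr1 //; apply: hc.
by rewrite muln_gt0 expn_gt0 fact_gt0.
Qed.

Lemma pf_diag_real (R : realFieldType) k (A : 'M[R]_(k+k)) : A^T = -A ->
  pfaffian (block_mx A 0 0 A : 'M_((k+k)+(k+k))) = \det A.
Proof.
move=> hA.
apply: (fmorph_inj (real_complex R)).
have m0 : forall p q, map_mx (real_complex R) (0 : 'M[R]_(p, q)) = 0.
  move=> p q; apply/matrixP => x y; rewrite !mxE; exact: rmorph0.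
rewrite -pfaffian_map -det_map_mx map_block_mx !m0.

apply: (@pf_diag _ _ 'i%C).
- by move=> n hn; rewrite -(rmorph_nat (real_complex R)) fmorph_eq0 pnatr_eq0 -lt0n hn.
- by apply/eqP; rewrite eq_complex /= ?mul0r ?mulr0 ?mul1r ?addr0 ?subr0 ?add0r ?sub0r ?oppr0 ?eqxx.
- by rewrite map_trmx hA map_mxN.
Qed.

Lemma zfact (V : zmodType) (x y : V) : - (- x - y) - x = y.
Proof. by rewrite opprB opprK addrK. Qed.

Lemma main_real (R : realFieldType) k (A B : 'M[R]_(k+k)) :
  A^T = -A -> B^T = -B ->
  block_mx A B B A *m (block_mx A B B A)^T = 1%:M -> \det A != 0 ->
  pfaffian (block_mx A B B A) = 1.
Proof.
move=> hA hB hO hd.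
have hu : A \in unitmx by rewrite unitmxE unitfE.
move: (invmx A) (mulmxV hu) (mulVmx hu) => Ai AAi AiA.
move: hO; rewrite tr_block_mx hA hB mulmx_block (scalar_mx_block (k+k) (k+k)) => /eq_block_mx [h1 h2 _ _].
have BB : B *m B = - 1%:M - A *m A.
  by rewrite -h1 !mulmxN opprD !opprK addrC addKr.
have AB : A *m B = - (B *m A).
  by apply/eqP; rewrite -subr_eq0 opprK -[X in X == _]opprK opprD -!mulmxN h2 oppr0.
have e0 : Ai^T *m A = - 1%:M.
  have e : Ai^T *m A^T = 1%:M by rewrite -trmx_mul AAi trmx1.
  by rewrite hA mulmxN in e; rewrite -e opprK.
have AiT : Ai^T = - Ai.
  by rewrite -[Ai^T]mulmx1 -AAi mulmxA e0 mulNmx mul1mx.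
have BAi : B *m Ai = - (Ai *m B).
  have := congr1 (fun X => Ai *m X *m Ai) AB.
  rewrite /= !mulmxA AiA mul1mx => ->.
  by rewrite mulmxN mulNmx !mulmxA -(mulmxA _ A) AAi mulmx1.
pose M0 : 'M[R]_((k+k)+(k+k)) := block_mx 1%:M (Ai *m B) 0 1%:M.
pose D : 'M[R]_((k+k)+(k+k)) := block_mx A 0 0 (- Ai).
pose N : 'M[R]_((k+k)+(k+k)) := block_mx 1%:M 0 0 Ai.
have c1 : M0^T *m D *m M0 = block_mx A B B A.
  rewrite /M0 /D tr_block_mx tr_scalar_mx trmx0 trmx_mul hB AiT !mulmx_block.
  rewrite ?mul0mx ?mulmx0 ?addr0 ?add0r ?mul1mx ?mulmx1.
  have b3 : - B *m - Ai *m A = B by rewrite mulNmx mulmxN opprK -mulmxA AiA mulmx1.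
  rewrite b3 addr0 mulmxA AAi mul1mx mulmxA BAi mulNmx -mulmxA BB mulmxBr.
  rewrite mulmxN mulmx1 mulmxA AiA mul1mx; congr block_mx; exact: zfact.
have c2 : N^T *m block_mx A 0 0 A *m N = D.
  rewrite /N /D tr_block_mx tr_scalar_mx trmx0 AiT !mulmx_block.
  rewrite ?mul0mx ?mulmx0 ?addr0 ?add0r ?mul1mx ?mulmx1.
  congr block_mx; first exact: mul0mx.
  by rewrite mulNmx AiA mulNmx mul1mx.
have dM : \det M0 = 1 by rewrite /M0 det_ublock !det1 mulr1.
have dN : \det N = \det Ai by rewrite /N det_ublock det1 mul1r.
have dAi : \det Ai * \det A = 1 by rewrite -det_mulmx AiA det1.
have pd := pf_diag_real hA.
rewrite pfaffianE in pd.
rewrite -c1 pfaffianE pfS_congr -c2 pfS_congr dM dN mul1r mulrCA pd mulrC.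
by rewrite mulrC dAi.
Qed.

Unset Implicit Arguments. Set Strict Implicit. Set Printing Implicit Defensive.

Theorem theorem4 (R : realFieldType) (n : nat) (Rd Ro : 'M[R]_n) :
  skew_symmetric Rd -> skew_symmetric Ro ->
  (block_mx Rd Ro Ro Rd) *m (block_mx Rd Ro Ro Rd)^T = 1%:M ->
  pfaffian (block_mx Rd Ro Ro Rd) = -1 ->
  \det Rd = 0.
Proof.
rewrite /skew_symmetric => hA hB hO hP.
case: (boolP (odd n)) => hn.
  have e : \det Rd = - \det Rd.
    by rewrite -{1}det_tr hA -scaleN1r detZ -signr_odd hn expr1 mulN1r.
  have : \det Rd * 2 = 0 by rewrite mulrDr mulr1 {1}e addNr.
  by move/eqP; rewrite mulf_eq0 pnatr_eq0 orbF => /eqP.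
have hk : n = (n./2 + n./2)%N.
  by rewrite addnn -{1}(odd_double_half n) (negbTE hn).
move: (n./2) hk => k hk; subst n.
apply/eqP; apply: contraT => hd.
have := main_real hA hB hO hd; rewrite hP => /eqP.
by rewrite -subr_eq0 -opprD oppr_eq0 -(natrD R 1 1) pnatr_eq0.
Qed.
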